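(* Let $p<0$ and $q\in\mathbb{R}$. Then any two elements of $\mathcal{A}_{p,q}^{-} = \{A\in S(4,\mathbb{R}) : \operatorname{Pf}(A) = p,\ \operatorname{s}(A) = q\}$ are equivalent under the action $\rho$, i.e. for any $A,B\in\mathcal{A}_{p,q}^{-}$ there is $P\in\operatorname{Sp}(4)$ with $B = P^TAP$.
   Context: $S(4,\mathbb{R})$ is the set of invertible skew-symmetric real $4\times4$ matrices; $J = \operatorname{diag}(J_0,J_0)$ with $J_0 = \begin{bmatrix} 0 & 1 \\ -1 & 0\end{bmatrix}$; $\operatorname{Sp}(4) = \{P : P^TJP = J\}$; $\rho(P,A) = P^TAP$. For $A = \begin{bmatrix} 0 & a & b & c \\ -a & 0 & d & e \\ -b & -d & 0 & f \\ -c & -e & -f & 0\end{bmatrix}$, $\operatorname{Pf}(A) = af-be+cd$ and $\operatorname{s}(A) = a+f$. *)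

(* Defs.v *)
From mathcomp Require Import all_boot all_order all_algebra.
From mathcomp Require Import reals.
Set Implicit Arguments. Unset Strict Implicit. Unset Printing Implicit Defensive.
Import Order.TTheory GRing.Theory Num.Theory.
Local Open Scope ring_scope.

(* Indices 0..3 of 'I_4 correspond to indices 1..4 of the paper. *)
Definition i0 : 'I_4 := @Ordinal 4 0 erefl.
Definition i1 : 'I_4 := @Ordinal 4 1 erefl.
Definition i2 : 'I_4 := @Ordinal 4 2 erefl.
Definition i3 : 'I_4 := @Ordinal 4 3 erefl.

Definition skew (R : realType) (A : 'M[R]_4) : Prop := A^T = - A.

Definition S4 (R : realType) (A : 'M[R]_4) : Prop := skew A /\ A \in unitmx.

(* J = diag(J0, J0), J0 = [[0,1],[-1,0]] *)
Definition Jmx (R : realType) : 'M[R]_4 :=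
  \matrix_(i < 4, j < 4)
    (if ((i == i0) && (j == i1)) || ((i == i2) && (j == i3)) then 1
     else if ((i == i1) && (j == i0)) || ((i == i3) && (j == i2)) then -1
     else 0).

Definition Sp4 (R : realType) (P : 'M[R]_4) : Prop := P^T *m Jmx R *m P = Jmx R.

(* For A = [[0,a,b,c],[-a,0,d,e],[-b,-d,0,f],[-c,-e,-f,0]]:
   a = A 0 1, b = A 0 2, c = A 0 3, d = A 1 2, e = A 1 3, f = A 2 3. *)
Definition Pf (R : realType) (A : 'M[R]_4) : R :=
  A i0 i1 * A i2 i3 - A i0 i2 * A i1 i3 + A i0 i3 * A i1 i2.

Definition sfun (R : realType) (A : 'M[R]_4) : R := A i0 i1 + A i2 i3.

Definition Aminus (R : realType) (p q : R) (A : 'M[R]_4) : Prop :=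
  S4 A /\ Pf A = p /\ sfun A = q.

(* Main.v *)
Require Import Defs.
From mathcomp Require Import all_boot all_order all_algebra.
From mathcomp Require Import reals ring lra.
Import Order.TTheory GRing.Theory Num.Theory.
Local Open Scope ring_scope.

Lemma ord4_cases (i : 'I_4) : [\/ i = i0, i = i1, i = i2 | i = i3].
Proof.
case: i => [[|[|[|[|k]]]] Hk] //.
- by apply: Or41; apply: val_inj.
- by apply: Or42; apply: val_inj.
- by apply: Or43; apply: val_inj.
- by apply: Or44; apply: val_inj.
Qed.

Lemma sum4 {R : realType} (F : 'I_4 -> R) : \sum_(k < 4) F k = F i0 + F i1 + F i2 + F i3.
Proof.
rewrite !big_ord_recl big_ord0 addr0 !addrA.
by do ! congr (_ + _); congr F; apply: val_inj.
Qed.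

Lemma skE {R : realType} {A : 'M[R]_4} : Defs.skew A -> forall i j, A j i = - A i j.
Proof.
move=> H i j.
have := congr1 (fun M : 'M[R]_4 => M i j) H.
by rewrite !mxE.
Qed.

Lemma skD {R : realType} {A : 'M[R]_4} : Defs.skew A -> forall i, A i i = 0.
Proof.
move=> H i; have := skE H i i.
by move=> /eqP; rewrite -subr_eq0 opprK -mulr2n mulrn_eq0 => /eqP.
Qed.

Definition skf {R : realType} (a b c d e f : R) (i j : nat) : R :=
  match i, j with
  | 0, 1 => a | 0, 2 => b | 0, 3 => c | 1, 2 => d | 1, 3 => e | 2, 3 => f
  | 1, 0 => -a | 2, 0 => -b | 3, 0 => -c | 2, 1 => -d | 3, 1 => -e | 3, 2 => -f
  | _, _ => 0 end.
Definition sk {R : realType} (a b c d e f : R) : 'M[R]_4 :=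
  \matrix_(i < 4, j < 4) skf a b c d e f i j.

Lemma skew_sk {R : realType} (A : 'M[R]_4) : Defs.skew A ->
  A = sk (A i0 i1) (A i0 i2) (A i0 i3) (A i1 i2) (A i1 i3) (A i2 i3).
Proof.
move=> H; apply/matrixP => i j; rewrite !mxE.
case: (ord4_cases i) => ->; case: (ord4_cases j) => -> /=;
  by rewrite ?(skD H) // (skE H).
Qed.

Definition Lm {R : realType} (A : 'M[R]_4) := (Jmx R)^T *m A.

Lemma L2sk {R : realType} (a b c d e f : R) :
  Lm (sk a b c d e f) *m Lm (sk a b c d e f) = (a + f) *: Lm (sk a b c d e f) - (a * f - b * e + c * d) *: 1%:M.
Proof.
apply/matrixP => i j; rewrite /Lm.
rewrite !mxE !sum4 !mxE !sum4 !mxE.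
case: (ord4_cases i) => ->; case: (ord4_cases j) => -> /=.
all: ring.
Qed.

Lemma L2 {R : realType} (A : 'M[R]_4) : Defs.skew A ->
  Lm A *m Lm A = sfun A *: Lm A - Pf A *: 1%:M.
Proof.
move=> H; rewrite /sfun /Pf (skew_sk _ H) !mxE /=.
exact: L2sk.
Qed.

Lemma JJt {R : realType} : Jmx R *m (Jmx R)^T = 1%:M.
Proof.
apply/matrixP => i j; rewrite !mxE sum4 !mxE.
by case: (ord4_cases i) => ->; case: (ord4_cases j) => -> /=; rewrite ?mxE /=; ring.
Qed.

Lemma JtJ {R : realType} : (Jmx R)^T *m Jmx R = 1%:M.
Proof. exact: mulmx1C JJt. Qed.

Lemma Jskew {R : realType} : (Jmx R)^T = - Jmx R.
Proof.
apply/matrixP => i j; rewrite !mxE.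
by case: (ord4_cases i) => ->; case: (ord4_cases j) => -> /=; rewrite ?mxE /=; ring.
Qed.

Lemma A_JL {R : realType} (A : 'M[R]_4) : A = Jmx R *m Lm A.
Proof. by rewrite /Lm mulmxA JJt mul1mx. Qed.

Definition form {R : realType} (M : 'M[R]_4) (x y : 'cV[R]_4) : R := (x^T *m M *m y) 0 0.

Lemma eigA {R : realType} (A : 'M[R]_4) (x : 'cV[R]_4) l :
  Lm A *m x = l *: x -> A *m x = l *: (Jmx R *m x).
Proof. by move=> H; rewrite {1}(A_JL A) -mulmxA H scalemxAr. Qed.

Lemma form_skew {R : realType} (M : 'M[R]_4) (x y : 'cV[R]_4) : M^T = - M -> form M y x = - form M x y.
Proof.
move=> H; rewrite /form.
have E (N : 'M[R]_1) : N 0 0 = N^T 0 0 by rewrite mxE.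
rewrite [in RHS]E.
by rewrite !trmx_mul trmxK H mulmxA mulmxN mulNmx [(- (_ : 'M[R]_1)) 0 0]mxE opprK.
Qed.

Lemma form_D {R : realType} (M : 'M[R]_4) (x y z : 'cV[R]_4) : form M x (y + z) = form M x y + form M x z.
Proof. by rewrite /form mulmxDr mxE. Qed.

Lemma form_Z {R : realType} (M : 'M[R]_4) (x y : 'cV[R]_4) c : form M x (c *: y) = c * form M x y.
Proof. by rewrite /form -scalemxAr mxE. Qed.

Lemma form_A {R : realType} (A : 'M[R]_4) (x y : 'cV[R]_4) l :
  A *m y = l *: (Jmx R *m y) -> form A x y = l * form (Jmx R) x y.
Proof. by move=> H; rewrite /form -mulmxA H -scalemxAr mxE mulmxA. Qed.

Lemma orth {R : realType} (A : 'M[R]_4) (x y : 'cV[R]_4) l1 l2 : Defs.skew A ->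
  Lm A *m x = l1 *: x -> Lm A *m y = l2 *: y -> l1 != l2 -> form (Jmx R) x y = 0.
Proof.
move=> Hs Hx Hy Hne.
have e1 := form_A _ x _ _ (eigA _ _ _ Hy).
have e2 := form_A _ y _ _ (eigA _ _ _ Hx).
have e3 := form_skew A x y Hs.
have e4 := form_skew (Jmx R) x y Jskew.
have : (l1 - l2) * form (Jmx R) x y = 0.
  have : form A x y = - form A y x by rewrite e3 opprK.
  rewrite e1 e2 e4 => E; rewrite mulrBl E; ring.
by move/eqP; rewrite mulf_eq0 subr_eq0 (negbTE Hne) => /eqP.
Qed.

Lemma eig_poly {R : realType} (A : 'M[R]_4) (z : 'cV[R]_4) mu nu : Defs.skew A ->
  mu + nu = sfun A -> mu * nu = Pf A ->
  Lm A *m (Lm A *m z - nu *: z) = mu *: (Lm A *m z - nu *: z).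
Proof.
move=> Hs Hq Hp.
rewrite mulmxBr mulmxA L2 // mulmxBl -!scalemxAl mul1mx -scalemxAr.
apply/matrixP => i j; rewrite !mxE -Hq -Hp; ring.
Qed.

Lemma sumsq_gt0 {R : realType} (u : 'cV[R]_4) : u != 0 -> 0 < (u^T *m u) 0 0.
Proof.
move=> Hu.
have nn : forall k : 'I_4, true -> 0 <= u^T 0 k * u k 0.
  by move=> k _; rewrite mxE -expr2 sqr_ge0.
rewrite mxE lt0r; apply/andP; split; last by apply: sumr_ge0.
apply: contra Hu => /eqP H0; apply/eqP/matrixP => i j; rewrite ord1 mxE.
have := @psumr_eq0P _ _ _ _ nn H0 i isT.
by rewrite mxE => /eqP; rewrite mulf_eq0 orbb => /eqP.
Qed.

Lemma pair_ex {R : realType} (A : 'M[R]_4) l1 l2 : Defs.skew A ->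
  l1 + l2 = sfun A -> l1 * l2 = Pf A -> l1 != l2 ->
  (exists x : 'cV[R]_4, Lm A *m x - l2 *: x != 0) ->
  exists u v : 'cV[R]_4, [/\ Lm A *m u = l1 *: u, Lm A *m v = l1 *: v & form (Jmx R) u v = 1].
Proof.
move=> Hs Hq Hp Hne [x Hx].
have Hq' : l2 + l1 = sfun A by rewrite addrC.
have Hp' : l2 * l1 = Pf A by rewrite mulrC.
set u := Lm A *m x - l2 *: x.
have Lu : Lm A *m u = l1 *: u by apply: eig_poly.
set y := (Jmx R)^T *m u.
set v0 := Lm A *m y - l2 *: y.
have Lv0 : Lm A *m v0 = l1 *: v0 by apply: eig_poly.
set w := Lm A *m y - l1 *: y.
have Lw : Lm A *m w = l2 *: w by apply: eig_poly.
have o : form (Jmx R) u w = 0 := orth _ _ _ _ _ Hs Lu Lw Hne.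
have v0w : v0 = w + (l1 - l2) *: y.
  by apply/matrixP => i j; rewrite /v0 /w !mxE; ring.
have sq : form (Jmx R) u y = (u^T *m u) 0 0.
  by rewrite /form /y mulmxA -(mulmxA u^T) JJt mulmx1.
have c : form (Jmx R) u v0 = (l1 - l2) * (u^T *m u) 0 0.
  by rewrite v0w form_D form_Z o add0r sq.
have cne : form (Jmx R) u v0 != 0.
  by rewrite c mulf_neq0 // ?subr_eq0 // lt0r_neq0 // sumsq_gt0.
exists u, ((form (Jmx R) u v0)^-1 *: v0); split => //.
  by rewrite -scalemxAr Lv0 !scalerA mulrC.
by rewrite form_Z mulVf.
Qed.

Lemma notscalar {R : realType} (A : 'M[R]_4) (l : R) : Pf A < 0 ->
  exists x : 'cV[R]_4, Lm A *m x - l *: x != 0.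
Proof.
move=> hp.
case: (pickP (fun j : 'I_4 => Lm A *m (delta_mx j 0 : 'cV[R]_4) - l *: (delta_mx j 0 : 'cV[R]_4) != 0)) => [j Hj | H].
  by exists (delta_mx j 0 : 'cV[R]_4).
have Le : forall i j, Lm A i j = l * (i == j)%:R.
  move=> i j; have := H j; move/negbFE; rewrite subr_eq0 => /eqP /matrixP /(_ i 0).
  rewrite !mxE sum4 !mxE andbT.
  case: (ord4_cases j) => -> /=; rewrite ?mxE /= => E; rewrite ?mulr1 ?mulr0 ?addr0 ?add0r in E; by rewrite eqxx andbT in E.
have : Pf A = l ^+ 2.
  rewrite /Pf (A_JL A) !mxE !sum4 !Le /= ?mxE /=; ring.
move=> E; move: hp; rewrite E ltNge sqr_ge0 //.
Qed.

Definition lam1 {R : realType} (p q : R) := (q + Num.sqrt (q ^+ 2 - 4 * p)) / 2.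
Definition lam2 {R : realType} (p q : R) := (q - Num.sqrt (q ^+ 2 - 4 * p)) / 2.
Definition Nf {R : realType} (l1 l2 : R) : 'M[R]_4 :=
  \matrix_(i < 4, j < 4) ((if (j < 2)%N then l1 else l2) * Jmx R i j).

Lemma entry_form {R : realType} (P M : 'M[R]_4) i j :
  (P^T *m M *m P) i j = form M (col i P) (col j P).
Proof.
rewrite /form !mxE; apply: eq_bigr => k _; rewrite !mxE; congr (_ * _).
by apply: eq_bigr => l _; rewrite !mxE.
Qed.

Lemma normal {R : realType} (A : 'M[R]_4) : Defs.skew A -> Pf A < 0 ->
  exists P, Sp4 P /\ P^T *m A *m P = Nf (lam1 (Pf A) (sfun A)) (lam2 (Pf A) (sfun A)).
Proof.
move=> Hs hp.
have q2 := sqr_ge0 (sfun A).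
set p := Pf A in hp *; set q := sfun A in q2 *.
have s2 : Num.sqrt (q ^+ 2 - 4 * p) ^+ 2 = q ^+ 2 - 4 * p by apply: sqr_sqrtr; lra.
have spos : 0 < Num.sqrt (q ^+ 2 - 4 * p) by rewrite sqrtr_gt0; lra.
set s := Num.sqrt (q ^+ 2 - 4 * p) in s2 spos.
set l1 := lam1 p q; set l2 := lam2 p q.
have Hq : l1 + l2 = q by rewrite /l1 /l2 /lam1 /lam2 -/s; lra.
have Hp : l1 * l2 = p.
  rewrite /l1 /l2 /lam1 /lam2 -/s.
  transitivity ((q ^+ 2 - s ^+ 2) / 4); first by field.
  by rewrite s2; field.
have Hne : l1 != l2.
  apply/eqP => E; have : l1 - l2 = s by rewrite /l1 /l2 /lam1 /lam2 -/s; field.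
  lra.
have Hq' : l2 + l1 = q by rewrite addrC.
have Hp' : l2 * l1 = p by rewrite [LHS]mulrC; exact: Hp.
have Hne' : l2 != l1 by rewrite eq_sym.
have [u1 [v1 [Lu1 Lv1 F1]]] := pair_ex _ _ _ Hs Hq Hp Hne (notscalar _ l2 hp).
have [u2 [v2 [Lu2 Lv2 F2]]] := pair_ex _ _ _ Hs Hq' Hp' Hne' (notscalar _ l1 hp).
have o11 := orth _ _ _ _ _ Hs Lu1 Lu2 Hne.
have o12 := orth _ _ _ _ _ Hs Lu1 Lv2 Hne.
have o21 := orth _ _ _ _ _ Hs Lv1 Lu2 Hne.
have o22 := orth _ _ _ _ _ Hs Lv1 Lv2 Hne.
have skewJ : forall x y, form (Jmx R) y x = - form (Jmx R) x y.
  by move=> x y; apply: form_skew; exact: Jskew.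
have self : forall x, form (Jmx R) x x = 0.
  move=> x; have := skewJ x x.
  by move=> /eqP; rewrite -subr_eq0 opprK -mulr2n mulrn_eq0 => /eqP.
set w := fun j : 'I_4 => if j == i0 then u1 else if j == i1 then v1 else if j == i2 then u2 else v2.
set P := \matrix_(i < 4, j < 4) (w j) i 0.
have colP : forall j, col j P = w j by move=> j; apply/matrixP => i k; rewrite !mxE ord1.
have HSp : P^T *m Jmx R *m P = Jmx R.
  apply/matrixP => i j; rewrite entry_form !colP /w.
  case: (ord4_cases i) => ->; case: (ord4_cases j) => -> /=;
  rewrite ?self ?F1 ?F2 ?o11 ?o12 ?o21 ?o22 ?(skewJ u1 v1) ?(skewJ u1 u2) ?(skewJ u1 v2)
     ?(skewJ v1 u2) ?(skewJ v1 v2) ?(skewJ u2 v2) ?F1 ?F2 ?o11 ?o12 ?o21 ?o22 ?oppr0;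
  by rewrite mxE.
have Lw : forall j, Lm A *m w j = (if (j < 2)%N then l1 else l2) *: w j.
  by move=> j; rewrite /w; case: (ord4_cases j) => -> /=.
exists P; split; first exact: HSp.
apply/matrixP => i j.
rewrite entry_form !colP (form_A _ _ _ _ (eigA _ _ _ (Lw j))) -!colP -entry_form HSp.
by rewrite /Nf [RHS]mxE.
Qed.

Lemma conj_assoc {R : realType} (X Y M : 'M[R]_4) :
  X^T *m (Y^T *m M *m Y) *m X = (Y *m X)^T *m M *m (Y *m X).
Proof. by rewrite trmx_mul !mulmxA. Qed.

Theorem lemma4p4 (R : realType) (p q : R) (hp : p < 0) (A B : 'M[R]_4) :
  Aminus p q A -> Aminus p q B ->
  exists P : 'M[R]_4, Sp4 P /\ B = P^T *m A *m P.
Proof.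
move=> [[HsA _] [HpA HqA]] [[HsB _] [HpB HqB]].
have nA : Pf A < 0 by rewrite HpA.
have nB : Pf B < 0 by rewrite HpB.
have [P [HP HPA]] := normal _ HsA nA.
have [Q [HQ HQB]] := normal _ HsB nB.
rewrite HpA HqA in HPA; rewrite HpB HqB in HQB.
set Qi := (Jmx R)^T *m Q^T *m Jmx R.
have QiQ : Qi *m Q = 1%:M.
  rewrite /Qi -!mulmxA; move: HQ; rewrite /Sp4 -mulmxA => ->; exact: JtJ.
have QQi : Q *m Qi = 1%:M := mulmx1C QiQ.
exists (P *m Qi); split.
  rewrite /Sp4 -conj_assoc HP.
  transitivity ((Q *m Qi)^T *m Jmx R *m (Q *m Qi)); last by rewrite QQi trmx1 mul1mx mulmx1.
  by rewrite -conj_assoc HQ.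
transitivity ((Q *m Qi)^T *m B *m (Q *m Qi)); first by rewrite QQi trmx1 mul1mx mulmx1.
by rewrite -conj_assoc HQB -HPA conj_assoc.
Qed.
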